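(* Let $I_n$ denote the number of inversion sequences of length $n$ avoiding all of the patterns $100$, $102$, $201$ (with $I_0=1$). Then $$\sum_{n\ge0} I_n z^n=\frac{2+z-10z^2+4z^3-(2-3z)\sqrt{1-4z-4z^2}}{8z(1-z)^2}.$$
   Context: An inversion sequence of length $n$ is an integer sequence $(a_1,\dots,a_n)$ with $0\le a_i<i$ for all $i$. A pattern is a sequence $\sigma$ of non-negative integers containing every value from $0$ to $\max(\sigma)$; the reduction of a sequence replaces its smallest values by $0$, the next smallest by $1$, etc. A sequence $a$ contains $\sigma$ if some (not necessarily consecutive) subsequence of $a$ has reduction $\sigma$; otherwise $a$ avoids $\sigma$. Equivalently, these are the inversion sequences with no $i<j<k$ such that $a_i>a_j$, $a_j\le a_k$ and $a_i\ne a_k$. The square root is the power series with constant term $1$. *)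

(* Defs.v *)
From mathcomp Require Import all_boot all_algebra.
Set Implicit Arguments. Unset Strict Implicit. Unset Printing Implicit Defensive.
Import GRing.Theory Num.Theory.

Definition same_order (s sigma : seq nat) : bool :=
  (size s == size sigma) &&
  [forall i : 'I_(size s), forall j : 'I_(size s),
     ((nth 0 s i < nth 0 s j) == (nth 0 sigma i < nth 0 sigma j)) &&
     ((nth 0 s i == nth 0 s j) == (nth 0 sigma i == nth 0 sigma j))]%N.

Definition contains (a sigma : seq nat) : bool :=
  [exists m : (size a).-tuple bool, same_order (mask m a) sigma].

Definition avoids (a sigma : seq nat) : bool := ~~ contains a sigma.

(* An inversion sequence of length n, 0-indexed: a_i <= i (i.e. 0 <= a_{i+1} < i+1). *)
Definition seq_of n (a : {ffun 'I_n -> 'I_n}) : seq nat :=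
  [seq nat_of_ord (a i) | i <- enum 'I_n].

Definition is_inv_seq n (a : {ffun 'I_n -> 'I_n}) : bool :=
  [forall i : 'I_n, (a i <= i)%N].

Definition I_count (n : nat) : nat :=
  #|[set a : {ffun 'I_n -> 'I_n} | is_inv_seq a &&
      [&& avoids (seq_of a) [:: 1; 0; 0],
          avoids (seq_of a) [:: 1; 0; 2] &
          avoids (seq_of a) [:: 2; 0; 1]]]|.

Definition fps := nat -> rat.
Definition fps_mul (f g : fps) : fps :=
  fun n => (\sum_(i < n.+1) f i * g (n - i)%N)%R.
Definition fps_of_poly (p : {poly rat}) : fps := fun n => (p`_n)%R.

(* Main.v *)
Require Import Defs.
From mathcomp Require Import all_boot all_algebra.
From mathcomp Require Import zify.
Set Implicit Arguments. Unset Strict Implicit. Unset Printing Implicit Defensive.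
From mathcomp Require Import ring.

Fixpoint pb (v : nat) (r : seq nat) : bool :=
  if r is y :: r' then ((y <= v) && has (fun x => (y < x) && (x != v)) r') || pb v r'
  else false.

Fixpoint invr (r : seq nat) : bool :=
  if r is v :: r' then (v <= size r') && invr r' else true.

Fixpoint valid (r : seq nat) : bool :=
  if r is v :: r' then [&& v <= size r', ~~ pb v r' & valid r'] else true.

Definition cond (x y z : nat) := (y < x) && (y <= z) && (x != z).

Lemma contains3 (s σ : seq nat) : size σ = 3 ->
  contains s σ <-> exists x y z, subseq [:: x; y; z] s /\ same_order [:: x; y; z] σ.
Proof.
move=> Hs; split.
  move/existsP => [m Hm].
  have Hsz : size (mask m s) = 3.
    by move: Hm; rewrite /same_order Hs => /andP [/eqP -> _].
  move: Hm (mask_subseq m s); case: (mask m s) Hsz => [|x [|y [|z [|w l]]]] //= _ Hm Hsub.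
  by exists x, y, z.
move=> [x [y [z [Hsub Hso]]]].
case/subseqP: Hsub => m Hm Heq.
have Hm' : size m == size s by apply/eqP.
by apply/existsP; exists (Tuple Hm'); rewrite /= -Heq.
Qed.

Lemma so_cond x y z :
  [|| same_order [:: x; y; z] [:: 1; 0; 0], same_order [:: x; y; z] [:: 1; 0; 2]
    | same_order [:: x; y; z] [:: 2; 0; 1]] = cond x y z.
Proof.
rewrite /cond; apply/idP/idP.
  have ext3 : forall σ, same_order [:: x; y; z] σ ->
     forall i j, i < 3 -> j < 3 ->
     ((nth 0 [:: x; y; z] i < nth 0 [:: x; y; z] j) == (nth 0 σ i < nth 0 σ j)) &&
     ((nth 0 [:: x; y; z] i == nth 0 [:: x; y; z] j) == (nth 0 σ i == nth 0 σ j)).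
    move=> σ /andP [_ /forallP H] i j Hi Hj.
    by move/forallP: (H (Ordinal Hi)) => /(_ (Ordinal Hj)).
  case/or3P => /ext3 H.
  - have := H 1 0 isT isT; have := H 1 2 isT isT; have := H 0 2 isT isT; rewrite /=; lia.
  - have := H 1 0 isT isT; have := H 1 2 isT isT; have := H 0 2 isT isT; rewrite /=; lia.
  - have := H 1 0 isT isT; have := H 1 2 isT isT; have := H 2 0 isT isT; rewrite /=; lia.
move=> Hc.
have so3 : forall a b c, (forall i j, i < 3 -> j < 3 ->
     ((nth 0 [:: x; y; z] i < nth 0 [:: x; y; z] j) == (nth 0 [:: a; b; c] i < nth 0 [:: a; b; c] j)) &&
     ((nth 0 [:: x; y; z] i == nth 0 [:: x; y; z] j) == (nth 0 [:: a; b; c] i == nth 0 [:: a; b; c] j))) ->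
     same_order [:: x; y; z] [:: a; b; c].
  move=> a b c H; rewrite /same_order /=; apply/forallP => i; apply/forallP => j.
  exact: H.
case E1: (y == z).
  apply/or3P; apply: Or31; apply: so3 => -[|[|[|i]]] [|[|[|j]]] //= _ _; lia.
case E2: (z < x).
  apply/or3P; apply: Or33; apply: so3 => -[|[|[|i]]] [|[|[|j]]] //= _ _; lia.
apply/or3P; apply: Or32; apply: so3 => -[|[|[|i]]] [|[|[|j]]] //= _ _; lia.
Qed.

Lemma avoid3P (s : seq nat) :
  [&& avoids s [:: 1; 0; 0], avoids s [:: 1; 0; 2] & avoids s [:: 2; 0; 1]] <->
  ~ (exists x y z, subseq [:: x; y; z] s /\ cond x y z).
Proof.
rewrite /avoids; split.
  move=> /and3P [H1 H2 H3] [x [y [z [Hsub Hc]]]].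
  rewrite -so_cond in Hc; case/or3P: Hc => Hso.
  - by move/negP: H1; apply; apply/(@contains3 s [:: 1; 0; 0] (erefl _)); exists x, y, z.
  - by move/negP: H2; apply; apply/(@contains3 s [:: 1; 0; 2] (erefl _)); exists x, y, z.
  - by move/negP: H3; apply; apply/(@contains3 s [:: 2; 0; 1] (erefl _)); exists x, y, z.
move=> Hn; apply/and3P; split; apply/negP.
- move/(@contains3 s [:: 1; 0; 0] (erefl _)) => [x [y [z [Hsub Hso]]]].
  by apply: Hn; exists x, y, z; split => //; rewrite -so_cond Hso ?orbT.
- move/(@contains3 s [:: 1; 0; 2] (erefl _)) => [x [y [z [Hsub Hso]]]].
  by apply: Hn; exists x, y, z; split => //; rewrite -so_cond Hso ?orbT.
- move/(@contains3 s [:: 2; 0; 1] (erefl _)) => [x [y [z [Hsub Hso]]]].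
  by apply: Hn; exists x, y, z; split => //; rewrite -so_cond Hso ?orbT.
Qed.

Lemma pbP v (r : seq nat) :
  pb v r <-> exists y x, subseq [:: y; x] r /\ (y < x) && (y <= v) && (x != v).
Proof.
elim: r => [|w r IH] /=.
  by split => // -[y [x []]].
split.
  case/orP.
    move=> /andP [Hw /hasP [x Hx /andP [H1 H2]]].
    exists w, x; rewrite eqxx sub1seq Hx; split => //; lia.
  move/IH => [y [x [Hs Hc]]]; exists y, x; split => //.
  by apply: subseq_trans Hs (subseq_cons r w).
move=> [y [x [Hs Hc]]].
case E: (y == w); rewrite E in Hs.
  move/eqP: E => E; subst w; apply/orP; left; rewrite sub1seq in Hs.
  apply/andP; split; first lia.
  by apply/hasP; exists x => //; lia.
apply/orP; right; apply/IH; by exists y, x.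
Qed.

Lemma validP (r : seq nat) :
  valid r <-> invr r /\ ~ (exists x y z, subseq [:: z; y; x] r /\ cond x y z).
Proof.
elim: r => [|v r IH] /=.
  by split => // _; split => // -[x [y [z []]]].
split.
  move=> /and3P [Hv Hpb /IH [Hi Hn]]; split; first by rewrite Hv Hi.
  move=> [x [y [z [Hs Hc]]]].
  case E: (z == v); rewrite E in Hs.
    move/eqP: E => E; subst z.
    by move/negP: Hpb; apply; apply/pbP; exists y, x; split => //; move: Hc; rewrite /cond; lia.
  by apply: Hn; exists x, y, z.
move=> [/andP [Hv Hi] Hn]; apply/and3P; split => //.
  apply/negP => /pbP [y [x [Hs Hc]]]; apply: Hn; exists x, y, v.
  by rewrite /= eqxx Hs; split => //; move: Hc; rewrite /cond; lia.
apply/IH; split => // -[x [y [z [Hs Hc]]]]; apply: Hn; exists x, y, z; split => //.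
by apply: subseq_trans Hs (subseq_cons r v).
Qed.

Lemma invr_rev (s : seq nat) :
  invr (rev s) = [forall i : 'I_(size s), nth 0 s i <= i].
Proof.
elim/last_ind: s => [|s v IH].
  by apply/esym/forallP => -[i Hi].
rewrite rev_rcons /= size_rev IH size_rcons.
apply/andP/forallP.
  move=> [Hv /forallP H] [i Hi] /=; rewrite nth_rcons.
  case: ltnP => Hi'; first exact: (H (Ordinal Hi')).
  have Ei : i = size s by lia.
  by rewrite Ei eqxx.
move=> H; split.
  by have := H (Ordinal (ltnSn (size s))); rewrite /= nth_rcons ltnn eqxx.
apply/forallP => -[i Hi]; have Hi2 : i < (size s).+1 by lia.
by have := H (Ordinal Hi2); rewrite /= nth_rcons Hi.
Qed.

Lemma size_seq_of n (a : {ffun 'I_n -> 'I_n}) : size (seq_of a) = n.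
Proof. by rewrite /seq_of size_map size_enum_ord. Qed.

Lemma nth_seq_of n (a : {ffun 'I_n -> 'I_n}) (i : 'I_n) : nth 0 (seq_of a) i = a i.
Proof.
rewrite /seq_of (nth_map i); last by rewrite size_enum_ord.
by rewrite nth_ord_enum.
Qed.

Lemma inv_seqE n (a : {ffun 'I_n -> 'I_n}) : is_inv_seq a = invr (rev (seq_of a)).
Proof.
rewrite invr_rev /is_inv_seq; apply/forallP/forallP.
  move=> H [i Hi]; have Hi2 := Hi; rewrite size_seq_of in Hi2.
  by have := H (Ordinal Hi2); rewrite /= -(nth_seq_of a (Ordinal Hi2)).
move=> H i; have Hi : i < size (seq_of a) by rewrite size_seq_of.
by have := H (Ordinal Hi); rewrite /= (nth_seq_of a i).
Qed.

Lemma ffun_valid n (a : {ffun 'I_n -> 'I_n}) :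
  (is_inv_seq a && [&& avoids (seq_of a) [:: 1; 0; 0],
          avoids (seq_of a) [:: 1; 0; 2] & avoids (seq_of a) [:: 2; 0; 1]])
  = valid (rev (seq_of a)).
Proof.
rewrite inv_seqE; apply/andP/idP.
  move=> [Hi /avoid3P Ha]; apply/validP; split => // -[x [y [z [Hs Hc]]]].
  by apply: Ha; exists x, y, z; split => //; rewrite -subseq_rev.
move/validP => [Hi Hn]; split => //; apply/avoid3P => -[x [y [z [Hs Hc]]]].
by apply: Hn; exists x, y, z; split => //; move: Hs; rewrite -(subseq_rev [:: x; y; z]).
Qed.

Fixpoint gen (n : nat) : seq (seq nat) :=
  if n is n'.+1 then [seq v :: r | r <- gen n', v <- index_iota 0 n] else [:: [::]].

Lemma gen_mem n (r : seq nat) : (r \in gen n) = (size r == n) && invr r.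
Proof.
elim: n r => [|n IH] r.
  by case: r => [|v r] //=; rewrite inE.
apply/idP/idP.
  move=> /flatten_mapP [r0 Hr0 /mapP [v Hv ->]].
  move: Hr0; rewrite IH => /andP [/eqP Hs Hi].
  by rewrite /= Hs Hi eqxx andbT; move: Hv; rewrite mem_index_iota; lia.
case: r => [|v r] //= /andP [Hs /andP [Hv Hi]].
apply/flatten_mapP; exists r; first by rewrite IH Hi andbT -eqSS.
apply: (@map_f _ _ (fun v0 => v0 :: r) (index_iota 0 n.+1) v); rewrite mem_index_iota; move: Hs Hv; lia.
Qed.

Lemma gen_uniq n : uniq (gen n).
Proof.
elim: n => [|n IH] //.
have -> : gen n.+1 = [seq v :: r | r <- gen n, v <- index_iota 0 n.+1] by [].
apply: allpairs_uniq => //; first exact: iota_uniq.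
by move=> [r v] [r' v'] _ _ /= [-> ->].
Qed.

Lemma valid_invr (r : seq nat) : valid r -> invr r.
Proof. by move/validP => []. Qed.
Fixpoint ext (r : seq nat) (t : nat) {struct t} : nat :=
  if t is t'.+1 then \sum_(0 <= v < (size r).+1 | ~~ pb v r) ext (v :: r) t' else 1.

Lemma extS r t : ext r t.+1 = \sum_(0 <= v < (size r).+1 | ~~ pb v r) ext (v :: r) t.
Proof. by []. Qed.

Lemma hockey b t : \sum_(0 <= v < b) 'C(v, t) = 'C(b, t.+1).
Proof.
elim: b => [|b IH]; first by rewrite big_geq.
by rewrite big_nat_recr //= IH binS.
Qed.

Lemma sum_cond_range (F : nat -> nat) (P : pred nat) a b n :
  a <= b -> b <= n -> (forall v, a <= v < n -> P v = (v < b)) ->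
  \sum_(a <= v < n | P v) F v = \sum_(a <= v < b) F v.
Proof.
move=> Hab Hbn HP.
rewrite (big_cat_nat Hab Hbn) /=.
rewrite [X in _ + X]big_nat_cond [X in _ + X]big_pred0 ?addn0; last first.
  move=> v /=; case Hv: (b <= v < n) => //=; rewrite HP; lia.
rewrite big_nat_cond [RHS]big_nat_cond; apply: eq_bigl => v.
case Hv: (a <= v < b) => //=; rewrite HP; lia.
Qed.

Lemma ext_Y t : forall b (r : seq nat), (forall v, pb v r = (b <= v)) ->
  (exists x1 x2, [/\ x1 \in r, x2 \in r, x1 != x2, b < x1 & b < x2]) ->
  b <= size r -> ext r t = 'C(b, t).
Proof.
elim: t => [|t IH] b r Hpb Hx Hb; first by rewrite bin0.
rewrite extS (@sum_cond_range _ _ 0 b) //; last 2 first.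
- lia.
- by move=> v _; rewrite Hpb -ltnNge.
rewrite -hockey; apply: eq_big_nat => v Hv.
have [x1 [x2 [H1 H2 H12 Hb1 Hb2]]] := Hx.
apply: IH.
- move=> w /=; rewrite Hpb.
  case: (leqP v w) => Hvw /=.
    suff -> : has (fun x => (v < x) && (x != w)) r by [].
    apply/hasP; case E: (x1 == w).
      exists x2 => //; apply/andP; split; first lia.
      by move/eqP: E => <-; rewrite eq_sym.
    by exists x1 => //; rewrite E andbT; lia.
  lia.
- exists x1, x2; split => //; rewrite ?inE ?H1 ?H2 ?orbT //; lia.
- by rewrite /=; lia.
Qed.

Lemma ext_X t : forall b M (r : seq nat), b < M -> b \in r -> M \in r ->
  all (fun x => x <= M) r -> (forall v, pb v r = (b <= v) && (v != M)) ->
  M <= size r -> ext r t = \sum_(d < t.+1) 'C(b, d).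
Proof.
elim: t => [|t IH] b M r HbM Hbr HMr Hall Hpb HM.
  by rewrite big_ord1 bin0.
have Hb : b <= (size r).+1 by lia.
rewrite extS (big_cat_nat (leq0n b) Hb) /=.
rewrite big_ord_recr /= [RHS]addnC; congr (_ + _).
  rewrite (@sum_cond_range _ _ 0 b b) //; last by move=> v Hv; rewrite Hpb; lia.
  rewrite -hockey; apply: eq_big_nat => v Hv.
  apply: ext_Y.
  - move=> w /=; rewrite Hpb.
    case: (leqP v w) => Hvw /=.
      suff -> : has (fun x => (v < x) && (x != w)) r by [].
      apply/hasP; case E: (b == w).
        exists M => //; apply/andP; split; first lia.
        by move/eqP: E => <-; rewrite eq_sym neq_ltn HbM.
      by exists b => //; rewrite E andbT; lia.
    lia.
  - exists b, M; split => //; rewrite ?inE ?Hbr ?HMr ?orbT //; lia.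
  - by rewrite /=; lia.
rewrite big_nat_cond (eq_bigl (fun v => (b <= v < (size r).+1) && (v == M))); last first.
  by move=> v; rewrite Hpb; case Hv: (v == M); move/eqP: Hv => //= ?; lia.
rewrite -big_nat_cond.
rewrite big_nat1_eq ifT; last lia.
apply: (IH b M) => //.
- by rewrite inE Hbr orbT.
- by rewrite inE eqxx.
- by rewrite /= leqnn.
- move=> v /=; rewrite Hpb.
  suff -> : has (fun x => (M < x) && (x != v)) r = false by rewrite andbF.
  apply/hasP => -[x Hx /andP [H1 _]]; move/allP: Hall => /(_ x Hx); lia.
- by rewrite /=; lia.
Qed.

Definition sec (r : seq nat) := head 0 [seq x <- r | x != head 0 r].

Definition D (L S t : nat) :=
  \sum_(0 <= v < S) 'C(v, t) + \sum_(S <= v < L) \sum_(d < t.+1) 'C(v, d).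

Lemma ext_W t (r : seq nat) : (forall v, pb v r = false) ->
  let L := head 0 r in let S := sec r in
  L <= size r -> S <= L -> (forall x, x \in r -> x <= L) ->
  (forall x, x \in r -> (x == L) || (x <= S)) ->
  (0 < S -> S \in r /\ S != L) -> (0 < L -> L \in r) ->
  ext r t.+1 = \sum_(L <= v < (size r).+1) ext (v :: r) t + D L S t.
Proof.
move=> Hpb L S HL HSL Hle Hor HS HL0; clearbody L S.
rewrite extS (eq_bigl xpredT); last by move=> v; rewrite Hpb.
rewrite (big_cat_nat (leq0n L)) /=; last lia.
rewrite (big_cat_nat (leq0n S) HSL) /= /D [RHS]addnC; congr (_ + _).
congr (_ + _).
  apply: eq_big_nat => v Hv; apply: ext_Y.
  - move=> w /=; rewrite Hpb orbF.
    case: (leqP v w) => Hvw /=; last by lia.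
    have [HSr HSneq] := HS ltac:(lia).
    apply/hasP; case E: (S == w).
      exists L; first by apply: HL0; lia.
      by apply/andP; split; [lia | move/eqP: E => <-; rewrite eq_sym].
    by exists S => //; rewrite E andbT; lia.
  - have [HSr HSneq] := HS ltac:(lia).
    exists L, S; split; rewrite ?inE ?HSr ?HL0 ?orbT //; try lia.
  - by rewrite /=; lia.
apply: eq_big_nat => v Hv; apply: (@ext_X t v L).
- lia.
- by rewrite inE eqxx.
- by rewrite inE HL0 ?orbT //; lia.
- by rewrite /= (ltnW (proj2 (andP Hv))); apply/allP.
- move=> w /=; rewrite Hpb orbF.
  congr (_ && _); apply/hasP/idP.
    move=> [x Hx /andP [H1 H2]]; move: (Hor x Hx) => /orP [/eqP Ex|Ex]; last by lia.
    by rewrite -Ex eq_sym.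
  move=> HwL; exists L; first by apply: HL0; lia.
  by rewrite eq_sym HwL andbT; lia.
- by rewrite /=; lia.
Qed.

Fixpoint wi (m : nat) : seq (seq nat) :=
  if m is m'.+1 then
    flatten [seq [seq v :: r | v <- index_iota (head 0 r) m] | r <- wi m']
  else [:: [::]].

Lemma wi_bigE (R : Type) (idx : R) (op : Monoid.com_law idx) m (F : seq nat -> R) :
  \big[op/idx]_(r <- wi m.+1) F r =
  \big[op/idx]_(r <- wi m) \big[op/idx]_(head 0 r <= v < m.+1) F (v :: r).
Proof.
rewrite /= big_flatten /= big_map; apply: eq_bigr => r _; by rewrite big_map.
Qed.

Lemma geq_tr : transitive geq.
Proof. by move=> a b c /= H1 H2; apply: leq_trans H2 H1. Qed.

Lemma wi_inv m (r : seq nat) : r \in wi m ->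
  [/\ size r = m, sorted geq r & all (fun x => x < m) r].
Proof.
elim: m r => [|m IH] r /=; first by rewrite inE => /eqP ->.
move/flatten_mapP => [r0 Hr0 /mapP [v Hv ->]].
have [Hs Hso Hall] := IH r0 Hr0.
rewrite mem_index_iota in Hv; case/andP: Hv => Hv1 Hv2.
split => /=.
- by rewrite Hs.
- case: r0 Hr0 Hs Hso Hall Hv1 => //= L r0 _ _ Hso _ Hv1.
  by rewrite Hv1 Hso.
- rewrite Hv2 /=; apply/allP => x Hx; move/allP: Hall => /(_ x Hx); lia.
Qed.

Lemma pb_sorted v (r : seq nat) : sorted geq r -> pb v r = false.
Proof.
elim: r => [|y r IH] //= Hso.
rewrite IH; last exact: (path_sorted Hso).
have Hall := order_path_min geq_tr Hso.
suff -> : has (fun x => (y < x) && (x != v)) r = false by rewrite andbF.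
apply/hasP => -[x Hx /andP [H1 _]]; move/allP: Hall => /(_ x Hx) /= ; lia.
Qed.

Lemma sorted_props (r : seq nat) : sorted geq r ->
  let L := head 0 r in let S := sec r in
  [/\ (forall x, x \in r -> x <= L), (forall x, x \in r -> (x == L) || (x <= S)),
      S <= L, (0 < S -> S \in r /\ S != L) & (0 < L -> L \in r)].
Proof.
case: r => [|L r] Hso L0 S0; first by split => //.
have Hall := order_path_min geq_tr Hso.
have HleL : forall x, x \in L :: r -> x <= L.
  move=> x; rewrite inE => /orP [/eqP -> //|Hx].
  by move/allP: Hall => /(_ x Hx).
rewrite /S0 /sec /= eqxx /=.
have Hsf : sorted geq [seq x <- r | x != L].
  apply: sorted_filter; first exact: geq_tr.
  exact: (path_sorted Hso).
have Hmax : forall x, x \in [seq x <- r | x != L] -> x <= head 0 [seq x <- r | x != L].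
  case: [seq x <- r | x != L] Hsf => [|y f] //= Hsf' x.
  rewrite inE => /orP [/eqP -> //|Hx].
  by move/allP: (order_path_min geq_tr Hsf') => /(_ x Hx).
split.
- exact: HleL.
- move=> x Hx; case E: (x == L) => //=.
  apply: Hmax; rewrite mem_filter E /=.
  by move: Hx; rewrite inE E.
- case E: [seq x <- r | x != L] => [|y f] //=.
  have : y \in [seq x <- r | x != L] by rewrite E inE eqxx.
  rewrite mem_filter => /andP [_ Hy]; apply: HleL; by rewrite inE Hy orbT.
- case E: [seq x <- r | x != L] => [|y f] //= _.
  have : y \in [seq x <- r | x != L] by rewrite E inE eqxx.
  by rewrite mem_filter => /andP [H1 H2]; rewrite inE H2 orbT H1.
- by rewrite inE eqxx.
Qed.

Lemma wi_sum t : forall m, \sum_(r <- wi m) ext r t =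
  size (wi (m + t)) + \sum_(k < t) \sum_(r <- wi (m + k)) D (head 0 r) (sec r) (t.-1 - k).
Proof.
elim: t => [|t IH] m.
  by rewrite addn0 big_ord0 addn0 -sum1_size; apply: eq_bigr.
have step : \sum_(r <- wi m) ext r t.+1 =
   \sum_(r <- wi m.+1) ext r t + \sum_(r <- wi m) D (head 0 r) (sec r) t.
  rewrite wi_bigE -big_split /=; apply: eq_big_seq => r Hr.
  have [Hs Hso Hall] := wi_inv Hr.
  have [H1 H2 H3 H4 H5] := sorted_props Hso.
  rewrite -extS (@ext_W t r (fun v => @pb_sorted v r Hso)) // ?Hs //.
  case: r Hr Hs Hso Hall {H1 H2 H3 H4 H5} => [|L r] //= _ <- _ /andP [HL _]; lia.
rewrite step IH big_ord_recl addSnnS -addnA; congr (_ + _); rewrite addnC; congr (_ + _).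
  by rewrite addn0 subn0.
apply: eq_bigr => k _; rewrite lift0 addSnnS; apply: eq_bigr => r _.
by congr (D _ _ _); rewrite /=; lia.
Qed.

Lemma I_formula n : ext [::] n =
  size (wi n) + \sum_(k < n) \sum_(r <- wi k) D (head 0 r) (sec r) (n.-1 - k).
Proof. by have := wi_sum n 0; rewrite /= big_seq1. Qed.

Lemma count_gen t : forall m,
  \sum_(r <- gen m | valid r) ext r t = count valid (gen (m + t)).
Proof.
elim: t => [|t IH] m.
  by rewrite addn0 -sum1_count; apply: eq_bigr.
rewrite -addSnnS -IH.
have -> : gen m.+1 = [seq v :: r | r <- gen m, v <- index_iota 0 m.+1] by [].
rewrite big_flatten big_map [LHS]big_mkcond; under [RHS]eq_bigr do rewrite big_map.
apply: eq_big_seq => r Hr.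
have Hs : size r = m by move: Hr; rewrite gen_mem => /andP [/eqP].
case Hv: (valid r).
  rewrite extS Hs big_nat_cond [RHS]big_nat_cond; apply: eq_bigl => v /=.
  rewrite Hv Hs andbT; case E: (v < m.+1) => //=; rewrite ?andbF //.
  by rewrite ltnS in E; rewrite E.
rewrite big_pred0 // => v /=; by rewrite Hv !andbF.
Qed.

Lemma I_count_ext n : I_count n = ext [::] n.
Proof.
have := count_gen n 0; rewrite /= big_mkcond big_seq1 /= add0n => ->.
rewrite /I_count cardE.
set A := [set a : {ffun 'I_n -> 'I_n} | _].
rewrite -(size_map (fun a => rev (seq_of a))) -size_filter.
apply: perm_size; apply: uniq_perm.
- rewrite map_inj_uniq ?enum_uniq // => a b /(congr1 rev); rewrite !revK => H.
  apply/ffunP => i; apply: val_inj => /=; by rewrite -!nth_seq_of H.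
- by rewrite filter_uniq // gen_uniq.
move=> x; rewrite mem_filter gen_mem; apply/mapP/idP.
  move=> [a Ha ->]; rewrite mem_enum inE ffun_valid in Ha.
  by rewrite Ha size_rev size_seq_of eqxx valid_invr.
move=> /andP [Hv /andP [/eqP Hs _]].
have Hi := valid_invr Hv.
pose a : {ffun 'I_n -> 'I_n} := [ffun i : 'I_n => insubd i (nth 0 (rev x) (nat_of_ord i))].
have Ea : seq_of a = rev x.
  apply: (@eq_from_nth _ 0); first by rewrite size_seq_of size_rev Hs.
  move=> i; rewrite size_seq_of => Hin.
  rewrite -[i]/(nat_of_ord (Ordinal Hin)) nth_seq_of ffunE val_insubd /=.
  have := Hi; rewrite -[x]revK invr_rev revK => /forallP.
  rewrite size_rev Hs => /(_ (Ordinal Hin)) /= H.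
  by rewrite ifT //; lia.
exists a; last by rewrite Ea revK.
by rewrite mem_enum inE ffun_valid Ea revK.
Qed.
Import GRing.Theory.
Local Open Scope ring_scope.

Definition eqm (N : nat) (p q : {poly rat}) := exists h, p - q = h * 'X^(N.+1).

Lemma eqmP N p q : eqm N p q <-> (forall i, (i <= N)%N -> p`_i = q`_i).
Proof.
split.
  move=> [h Hh] i Hi; apply/eqP; rewrite -subr_eq0 -coefB Hh coefMXn.
  by rewrite ltnS Hi.
move=> H; exists (drop_poly N.+1 (p - q)).
have Ht : take_poly N.+1 (p - q) = 0.
  apply/polyP => i; rewrite coef_take_poly coef0 coefB.
  by case: ifP => // Hi; rewrite H ?subrr.
by rewrite -{1}(poly_take_drop N.+1 (p - q)) Ht add0r.
Qed.

Lemma eqm_refl N p : eqm N p p.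
Proof. by exists 0; rewrite subrr mul0r. Qed.

Lemma eqm_exact N p q : p = q -> eqm N p q.
Proof. by move=> ->; apply: eqm_refl. Qed.

Lemma eqm_sym N p q : eqm N p q -> eqm N q p.
Proof. by move=> [h Hh]; exists (- h); rewrite mulNr -Hh opprB. Qed.

Lemma eqm_trans N p q r : eqm N p q -> eqm N q r -> eqm N p r.
Proof.
by move=> [h1 H1] [h2 H2]; exists (h1 + h2); rewrite mulrDl -H1 -H2 addrA subrK.
Qed.

Lemma eqm_add N p q p' q' : eqm N p q -> eqm N p' q' -> eqm N (p + p') (q + q').
Proof.
move=> [h1 H1] [h2 H2]; exists (h1 + h2).
by rewrite mulrDl -H1 -H2; ring.
Qed.

Lemma eqm_mull N a p q : eqm N p q -> eqm N (a * p) (a * q).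
Proof. by move=> [h H]; exists (a * h); rewrite -mulrA -H; ring. Qed.

Lemma eqm_mul N p q p' q' : eqm N p q -> eqm N p' q' -> eqm N (p * p') (q * q').
Proof.
move=> [h1 H1] [h2 H2]; exists (h1 * p' + q * h2).
have -> : p * p' - q * q' = (p - q) * p' + q * (p' - q') by ring.
by rewrite H1 H2; ring.
Qed.

Lemma eqm_comp_r N p a b : eqm N a b -> eqm N (p \Po a) (p \Po b).
Proof.
move=> Hab; elim/poly_ind: p => [|p c IH]; first by rewrite !comp_poly0; apply: eqm_refl.
rewrite !comp_polyD !comp_polyM !comp_polyX !comp_polyC.
apply: eqm_add; last by apply: eqm_refl.
exact: eqm_mul.
Qed.

Lemma eqm_comp_l N p q (u : {poly rat}) : u`_0 = 0 -> eqm N p q -> eqm N (p \Po u) (q \Po u).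
Proof.
move=> Hu [h H].
have Hu' : u = drop_poly 1 u * 'X.
  rewrite -{1}(poly_take_drop 1 u) expr1.
  have -> : take_poly 1 u = 0.
    by apply/polyP => i; rewrite coef_take_poly coef0; case: i => //=.
  by rewrite add0r.
exists ((h \Po u) * (drop_poly 1 u) ^+ N.+1).
rewrite -comp_polyB H comp_polyM comp_Xn_poly. rewrite {2}Hu' exprMn; ring.
Qed.

Definition gf N (f : nat -> {poly rat}) := \sum_(m < N.+1) 'X^m * f m.
Definition geo N : {poly rat} := \sum_(m < N.+1) 'X^m.

Lemma gf_shift N f :
  \sum_(m < N.+1) 'X^m * ('X * f m.+1) = gf N f - f 0%N + 'X^(N.+1) * f N.+1.
Proof.
have H1 : gf N.+1 f = f 0%N + \sum_(m < N.+1) 'X^m * ('X * f m.+1).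
  rewrite /gf big_ord_recl /= expr0 mul1r; congr (_ + _).
  apply: eq_bigr => i _. rewrite /bump /= add1n exprS. ring.
have H2 : gf N.+1 f = gf N f + 'X^(N.+1) * f N.+1 by rewrite /gf big_ord_recr.
have : f 0%N + \sum_(m < N.+1) 'X^m * ('X * f m.+1) = gf N f + 'X^(N.+1) * f N.+1
  by rewrite -H1 -H2.
move=> H; have -> : gf N f = f 0%N + \sum_(m < N.+1) 'X^m * ('X * f m.+1) - 'X^(N.+1) * f N.+1 by rewrite H; ring.
 ring.
Qed.

Lemma geoP N : geo N * (1 - 'X) = 1 - 'X^(N.+1).
Proof.
elim: N => [|N IH]; first by rewrite /geo big_ord1 expr0 mul1r expr1.
rewrite /geo big_ord_recr /= mulrDl -/(geo N) IH. rewrite (exprS _ N.+1); move: (('X : {poly rat})^+N.+1) => t; ring.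
Qed.

Lemma comp_sum N (c : nat -> rat) (q : {poly rat}) :
  (\sum_(m < N.+1) (c m)%:P * 'X^m) \Po q = \sum_(m < N.+1) (c m)%:P * q ^+ m.
Proof.
elim: N => [|N IH].   by rewrite !big_ord1 comp_polyM comp_polyC comp_Xn_poly.
by rewrite big_ord_recr /= comp_polyD IH comp_polyM comp_polyC comp_Xn_poly [RHS]big_ord_recr.
Qed.

Lemma eqm_cancel N (c : rat) a b : c != 0 -> eqm N (c%:P * a) (c%:P * b) -> eqm N a b.
Proof.
move=> hc H; have := eqm_mull (c^-1)%:P H.
by rewrite !mulrA -polyCM mulVf // polyC1 !mul1r.
Qed.

Lemma sum_shift_eqm N (f : nat -> {poly rat}) :
  \sum_(m < N.+1) 'X^m * ('X * f m.+1) = gf N f - f 0%N + 'X^(N.+1) * f N.+1.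
Proof. exact: gf_shift. Qed.

Lemma partC N (c : nat -> rat) (W : nat -> {poly rat} -> {poly rat})
  (h g : nat -> {poly rat}) (F s : {poly rat}) :
  (forall m (y : {poly rat}), (y - 1) * W m.+1 y = y ^+ m.+1 * (c m)%:P - W m y) ->
  (forall y, W 0%N y = 1) ->
  (forall m, 'X * h m.+1 = (1 + 'X) * W m.+1 (1 + 'X) - W m (1 + 'X) - h m) ->
  h 0%N = 0 ->
  (forall m, g m.+1 = g m + h m) -> g 0%N = 1 ->
  eqm N F (gf N g + (gf N (fun m => W m (1 + 'X)) - gf N g) * geo N) ->
  eqm N (s * s) (1 - 4%:R *: 'X - 4%:R *: 'X^2) -> s`_0 = 1 ->
  eqm N (8%:R *: ('X * (1 - 'X) ^+ 2) * F)
        (2%:R + 'X - 10%:R *: 'X^2 + 4%:R *: 'X^3 - (2%:R - 3%:R *: 'X) * s).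
Proof.
move=> HW HW0 Hh Hh0 Hg Hg0 HF Hs Hs0.
set E := gf N (fun m => W m (1 + 'X)).
set G := gf N g.
set H := gf N h.
set Cp := \sum_(m < N.+1) (c m)%:P * 'X^m.
set V := Cp \Po ('X * (1 + 'X)).
have sumC : forall (y : {poly rat}),
    \sum_(m < N.+1) 'X^m * (y ^+ m.+1 * (c m)%:P) = y * (Cp \Po ('X * y)).
  move=> y; rewrite comp_sum mulr_sumr; apply: eq_bigr => i _.
  by rewrite exprMn exprS; ring.
have K4 : eqm N (2%:R * E) (1 + (1 + 'X) * V).
  have S1 := sum_shift_eqm N (fun m => W m (1 + 'X)).
  have S2 : \sum_(m < N.+1) 'X^m * ('X * W m.+1 (1 + 'X)) =
      \sum_(m < N.+1) 'X^m * ((1 + 'X) ^+ m.+1 * (c m)%:P) - E.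
    rewrite /E /gf -sumrB; apply: eq_bigr => i _.
    have := HW i (1 + 'X); rewrite (_ : 1 + 'X - 1 = 'X); last by ring.
    by move=> ->; ring.
  rewrite sumC -/V in S2.
  exists (- W N.+1 (1 + 'X)).
  have : E - W 0%N (1 + 'X) + 'X^(N.+1) * W N.+1 (1 + 'X) = (1 + 'X) * V - E
    by rewrite -S1 S2.
  rewrite HW0 => HH.
  have -> : 2%:R * E - (1 + (1 + 'X) * V) =
      (E - 1 + 'X^(N.+1) * W N.+1 (1 + 'X)) - ((1 + 'X) * V - E) - 'X^(N.+1) * W N.+1 (1 + 'X)
    by ring.
  by rewrite HH; ring.
have K3 : eqm N (2%:R * 'X * H) ((1 + 'X) * (E - 1) - 'X * E).
  have S1 := sum_shift_eqm N h.
  have S1' := sum_shift_eqm N (fun m => W m (1 + 'X)).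
  rewrite -/H Hh0 in S1; rewrite -/E HW0 in S1'.
  have S2 : \sum_(m < N.+1) 'X^m * ('X * h m.+1) =
      (1 + 'X) * \sum_(m < N.+1) 'X^m * W m.+1 (1 + 'X) - E - H.
    rewrite /E /H /gf mulr_sumr -!sumrB; apply: eq_bigr => i _.
    by rewrite Hh; ring.
  have S3 : 'X * \sum_(m < N.+1) 'X^m * W m.+1 (1 + 'X) =
      \sum_(m < N.+1) 'X^m * ('X * W m.+1 (1 + 'X)).
    by rewrite mulr_sumr; apply: eq_bigr => i _; ring.
  rewrite S1' in S3.
  exists ((1 + 'X) * W N.+1 (1 + 'X) - 'X * h N.+1).
  have HH : 'X * (H - 0 + 'X^(N.+1) * h N.+1) =
      (1 + 'X) * ('X * \sum_(m < N.+1) 'X^m * W m.+1 (1 + 'X)) - 'X * E - 'X * H.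
    by rewrite -S1 S2; ring.
  rewrite S3 in HH.
  have -> : 2%:R * 'X * H - ((1 + 'X) * (E - 1) - 'X * E) =
     'X * (H - 0 + 'X^(N.+1) * h N.+1) -
     ((1 + 'X) * (E - 1 + 'X^(N.+1) * W N.+1 (1 + 'X)) - 'X * E - 'X * H)
     + 'X^(N.+1) * ((1 + 'X) * W N.+1 (1 + 'X) - 'X * h N.+1) by ring.
  by rewrite HH; ring.
have K2 : eqm N ((1 - 'X) * G) (1 + 'X * H).
  have S1 := sum_shift_eqm N g.
  rewrite -/G Hg0 in S1.
  have S2 : \sum_(m < N.+1) 'X^m * ('X * g m.+1) = 'X * G + 'X * H.
    rewrite /G /H /gf !mulr_sumr -big_split /=; apply: eq_bigr => i _.
    by rewrite Hg; ring.
  exists (- g N.+1).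
  have HH : G - 1 + 'X^(N.+1) * g N.+1 = 'X * G + 'X * H by rewrite -S1 S2.
  have -> : (1 - 'X) * G - (1 + 'X * H) =
     (G - 1 + 'X^(N.+1) * g N.+1) - ('X * G + 'X * H) - 'X^(N.+1) * g N.+1 by ring.
  by rewrite HH; ring.
have K1 : eqm N ((1 - 'X) * F) (E - 'X * G).
  apply: eqm_trans (eqm_mull (1 - 'X) HF) _.
  exists (G - E).
  have := geoP N; move: (geo N) => q Hq.
  have -> : (1 - 'X) * (G + (E - G) * q) - (E - 'X * G) = (E - G) * (q * (1 - 'X)) - (E - G) * 1
    by ring.
  by rewrite Hq; ring.
have K0 : eqm N 1 ((1 - 'X) * (Cp \Po ('X * (1 - 'X)))).
  set E' := gf N (fun m => W m (1 - 'X)).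
  have S1 := sum_shift_eqm N (fun m => W m (1 - 'X)).
  rewrite -/E' HW0 in S1.
  have S2 : \sum_(m < N.+1) 'X^m * ('X * W m.+1 (1 - 'X)) =
      E' - \sum_(m < N.+1) 'X^m * ((1 - 'X) ^+ m.+1 * (c m)%:P).
    rewrite /E' /gf -sumrB; apply: eq_bigr => i _.
    have := HW i (1 - 'X); rewrite (_ : 1 - 'X - 1 = - 'X); last by ring.
    move=> HH; have -> : 'X * W i.+1 (1 - 'X) = - (- 'X * W i.+1 (1 - 'X)) by ring.
    by rewrite HH; ring.
  rewrite sumC in S2.
  exists (W N.+1 (1 - 'X)).
  have HH : E' - 1 + 'X^(N.+1) * W N.+1 (1 - 'X) = E' - (1 - 'X) * (Cp \Po ('X * (1 - 'X)))
    by rewrite -S1 S2.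
  have -> : 1 - (1 - 'X) * (Cp \Po ('X * (1 - 'X))) =
     (E' - (1 - 'X) * (Cp \Po ('X * (1 - 'X)))) - (E' - 1 + 'X^(N.+1) * W N.+1 (1 - 'X))
     + 'X^(N.+1) * W N.+1 (1 - 'X) by ring.
  by rewrite -HH; ring.
set k : {poly rat} := (2^-1)%:P.
have hk : 2%:R * k = 1.
  by rewrite /k -polyC_natr -polyCM mulfV // polyC1.
set u := k * (1 - s).
have h2u : 2%:R * u = 1 - s by rewrite /u mulrA hk mul1r.
have hs : s = 1 - 2%:R * u by rewrite h2u; ring.
have hu0 : u`_0 = 0.
  by rewrite /u /k mul_polyC coefZ coefB coef1 Hs0 subrr mulr0.
have Ku : eqm N (u * (1 - u)) ('X * (1 + 'X)).
  apply: (@eqm_cancel N 4%:R); first by [].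
  rewrite !polyC_natr.
  have -> : 4%:R * (u * (1 - u)) = 2%:R * (2%:R * u) - (2%:R * u) * (2%:R * u) by ring.
  rewrite h2u.
  have [h0 H0] := Hs.
  exists (- h0).
  have -> : 2%:R * (1 - s) - (1 - s) * (1 - s) - 4%:R * ('X * (1 + 'X)) =
     - (s * s - (1 - 4%:R *: 'X - 4%:R *: 'X^2)) by rewrite -!mul_polyC !polyC_natr; ring.
  by rewrite H0; ring.
have K6 : eqm N ((1 - u) * V) 1.
  have := eqm_comp_l hu0 K0.
  rewrite comp_polyC comp_polyM comp_polyB comp_polyC comp_polyX -comp_polyA.
  rewrite comp_polyM comp_polyX comp_polyB comp_polyC comp_polyX.
  move=> HH; apply: eqm_sym; apply: eqm_trans HH _.
  apply: eqm_mull; exact: eqm_comp_r.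
have K5 : eqm N ('X * (1 + 'X) * V) u.
  apply: eqm_trans (eqm_mul (eqm_sym Ku) (eqm_refl N V)) _.
  have := eqm_mull u K6; rewrite mulr1 mulrA; apply.
rewrite hs -!mul_polyC !polyC_natr.
have [h1 E1] := K1; have [h2 E2] := K2; have [h3 E3] := K3;
have [h4 E4] := K4; have [h5 E5] := K5.
exists (8%:R * 'X * (1 - 'X) * h1 - 8%:R * 'X^2 * h2 - 4%:R * 'X^2 * h3
        + (4%:R * 'X - 6%:R * 'X^2) * h4 + (4%:R - 6%:R * 'X) * h5).
have -> : 8%:R * ('X * (1 - 'X) ^+ 2) * F -
  (2%:R + 'X - 10%:R * 'X^2 + 4%:R * 'X^3 - (2%:R - 3%:R * 'X) * (1 - 2%:R * u)) =
  8%:R * 'X * (1 - 'X) * ((1 - 'X) * F - (E - 'X * G))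
  - 8%:R * 'X^2 * ((1 - 'X) * G - (1 + 'X * H))
  - 4%:R * 'X^2 * (2%:R * 'X * H - ((1 + 'X) * (E - 1) - 'X * E))
  + (4%:R * 'X - 6%:R * 'X^2) * (2%:R * E - (1 + (1 + 'X) * V))
  + (4%:R - 6%:R * 'X) * ('X * (1 + 'X) * V - u) by ring.
rewrite E1 E2 E3 E4 E5; ring.
Qed.
Lemma sum_const_poly (T : Type) (s : seq T) (x : {poly rat}) :
  \sum_(r <- s) x = (size s)%:R * x.
Proof.
elim: s => [|a s IH]; first by rewrite big_nil mul0r.
by rewrite big_cons IH /= -natr1; ring.
Qed.

Lemma geo_range (y : {poly rat}) a n : (a <= n)%N ->
  (y - 1) * \sum_(a <= v < n) y ^+ v = y ^+ n - y ^+ a.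
Proof.
elim: n => [|n IH] Ha.
  have Ea : a = 0%N by lia.
  by rewrite Ea big_geq // mulr0 subrr.
case: (ltnP n a) => Hna.
  have -> : a = n.+1 by lia.
  by rewrite big_geq // mulr0 subrr.
rewrite big_nat_recr //= mulrDr IH // exprS; ring.
Qed.

Lemma lin_range (y : {poly rat}) a n : (a <= n)%N ->
  (y - 1) * \sum_(a <= v < n) ((n - v)%N)%:R * y ^+ v =
  y * \sum_(a <= v < n) y ^+ v - ((n - a)%N)%:R * y ^+ a.
Proof.
elim: n => [|n IH] Ha.
  have Ea : a = 0%N by lia.
  by rewrite Ea !big_geq // subnn !mulr0 mul0r subrr.
case: (ltnP n a) => Hna.
  have -> : a = n.+1 by lia.
  by rewrite !big_geq // subnn !mulr0 mul0r subrr.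
rewrite !big_nat_recr //= subSnn.
have -> : \sum_(a <= i < n) ((n.+1 - i)%N)%:R * y ^+ i =
   \sum_(a <= i < n) ((n - i)%N)%:R * y ^+ i + \sum_(a <= i < n) y ^+ i.
  rewrite -big_split /=; apply: eq_big_nat => i Hi.
  by rewrite subSn; [rewrite -natr1; ring | lia].
rewrite !mulrDr IH // geo_range // subSn // -natr1; ring.
Qed.

Definition Wp m (y : {poly rat}) : {poly rat} := \sum_(r <- wi m) y ^+ (head 0%N r).
Definition cc m : rat := (size (wi m))%:R.
Definition hp m : {poly rat} :=
  \sum_(r <- wi m) ((m - head 0%N r)%N)%:R * (1 + 'X) ^+ (head 0%N r).
Definition gp m : {poly rat} := \sum_(r <- wi m) (1 + 'X) ^+ (sec r).

Lemma head_wi m (r : seq nat) : r \in wi m -> (head 0%N r <= m)%N.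
Proof.
move/wi_inv => [_ _ Hall]; case: r Hall => [|L r] //= /andP [H _]; lia.
Qed.

Lemma HW m (y : {poly rat}) : (y - 1) * Wp m.+1 y = y ^+ m.+1 * (cc m)%:P - Wp m y.
Proof.
rewrite /Wp wi_bigE mulr_sumr.
rewrite (eq_big_seq (fun r => y ^+ m.+1 - y ^+ (head 0%N r))); last first.
  move=> r Hr /=; rewrite -geo_range //; last by have := head_wi Hr; lia.
by rewrite sumrB sum_const_poly /cc polyC_natr mulrC.
Qed.

Lemma HW0 (y : {poly rat}) : Wp 0 y = 1.
Proof. by rewrite /Wp /= big_seq1 expr0. Qed.

Lemma sec_cons v (r : seq nat) :
  sec (v :: r) = if v == head 0%N r then sec r else head 0%N r.
Proof.
rewrite /sec /= eqxx /=; case: ifP => [/eqP -> //|Hv].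
by case: r Hv => [|L r] //= Hv; rewrite eq_sym Hv.
Qed.

Lemma Hh m : 'X * hp m.+1 = (1 + 'X) * Wp m.+1 (1 + 'X) - Wp m (1 + 'X) - hp m.
Proof.
rewrite /hp /Wp !wi_bigE /= mulr_sumr.
rewrite (eq_big_seq (fun r => (1 + 'X) * \sum_(head 0%N r <= v < m.+1) (1 + 'X) ^+ v
    - ((m.+1 - head 0%N r)%N)%:R * (1 + 'X) ^+ (head 0%N r))); last first.
  move=> r Hr /=; have Hh := head_wi Hr.
  rewrite -lin_range; last by lia.
  by congr (_ * _); ring.
rewrite sumrB mulr_sumr -!sumrB; apply: eq_big_seq => r Hr.
have Hh := head_wi Hr.
by rewrite subSn // -natr1; ring.
Qed.

Lemma Hh0 : hp 0 = 0.
Proof. by rewrite /hp /= big_seq1 subnn mul0r. Qed.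

Lemma Hg m : gp m.+1 = gp m + hp m.
Proof.
rewrite /gp /hp wi_bigE -big_split /=; apply: eq_big_seq => r Hr.
have Hh := head_wi Hr.
rewrite big_ltn; last by lia.
rewrite sec_cons eqxx; congr (_ + _).
rewrite (eq_big_nat _ _ (F2 := fun _ => (1 + 'X) ^+ head 0%N r)); last first.
  move=> v Hv; rewrite sec_cons ifN //; apply/eqP; lia.
by rewrite sumr_const_nat mulr_natl subSS.
Qed.

Lemma Hg0 : gp 0 = 1.
Proof. by rewrite /gp /= big_seq1 expr0. Qed.

Lemma coef_1X v j : ((1 + 'X : {poly rat}) ^+ v)`_j = ('C(v, j))%:R.
Proof.
elim: v j => [|v IH] j; first by rewrite expr0 coef1 bin0n.
rewrite exprS mulrDl mul1r coefD coefXM IH.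
case: j => [|j] /=; first by rewrite !bin0 addr0.
by rewrite IH binS natrD addrC.
Qed.

Lemma coef_geo N k : (geo N)`_k = ((k <= N)%N)%:R.
Proof.
elim: N => [|N IH]; first by rewrite /geo big_ord1 coefXn leqn0.
rewrite /geo big_ord_recr /= -/(geo N) coefD IH coefXn.
case: (ltngtP k N.+1) => H.
- by rewrite (_ : (k <= N)%N = true) ?addr0 //; lia.
- by rewrite (_ : (k <= N)%N = false) ?addr0 //; lia.
- by rewrite H (_ : (N.+1 <= N)%N = false) ?add0r //; lia.
Qed.

Lemma coef_1Xgeo N v j : (j <= N)%N ->
  ((1 + 'X) ^+ v * geo N)`_j = (\sum_(d < j.+1) 'C(v, d))%:R.
Proof.
move=> Hj; rewrite coefM natr_sum; apply: eq_bigr => i _.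
by rewrite coef_1X coef_geo (_ : (j - i <= N)%N = true) ?mulr1 //; lia.
Qed.

Definition Dl N (r : seq nat) : {poly rat} :=
  \sum_(0 <= v < sec r) 'X * (1 + 'X) ^+ v +
  \sum_(sec r <= v < head 0%N r) 'X * ((1 + 'X) ^+ v * geo N).

Lemma coef_Dl0 N r : (Dl N r)`_0 = 0.
Proof.
rewrite /Dl coefD !coef_sum !big1 ?addr0 // => i _; by rewrite coefXM.
Qed.

Lemma coef_DlS N r t : (t < N)%N -> (Dl N r)`_t.+1 = (D (head 0%N r) (sec r) t)%:R.
Proof.
move=> Ht; rewrite /Dl /D coefD !coef_sum natrD !natr_sum; congr (_ + _).
  by apply: eq_bigr => i _; rewrite coefXM /= coef_1X.
apply: eq_bigr => i _; rewrite coefXM /= coef_1Xgeo //; lia.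
Qed.

Lemma Dl_exact N (r : seq nat) : (sec r <= head 0%N r)%N ->
  Dl N r = ((1 + 'X) ^+ (sec r) - 1) +
           ((1 + 'X) ^+ (head 0%N r) - (1 + 'X) ^+ (sec r)) * geo N.
Proof.
move=> HSL; rewrite /Dl -[X in X + _]mulr_sumr.
rewrite [X in _ + X](eq_bigr (fun v => 'X * (1 + 'X) ^+ v * geo N)); last by move=> i _; rewrite mulrA.
rewrite -mulr_suml -mulr_sumr.
have G1 := geo_range (1 + 'X) (leq0n (sec r)).
have G2 := geo_range (1 + 'X) HSL.
have EX : (1 + 'X - 1 : {poly rat}) = 'X by ring.
rewrite EX in G1 G2.
by rewrite G1 G2 expr0.
Qed.

Lemma per_k N k : gp k + (Wp k (1 + 'X) - gp k) * geo N =
  (cc k)%:P + \sum_(r <- wi k) Dl N r.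
Proof.
rewrite (eq_big_seq (fun r => ((1 + 'X) ^+ (sec r) - 1) +
           ((1 + 'X) ^+ (head 0%N r) - (1 + 'X) ^+ (sec r)) * geo N)); last first.
  move=> r Hr; apply: Dl_exact.
  by have [_ Hso _] := wi_inv Hr; have [] := sorted_props Hso.
rewrite big_split /= !sumrB -mulr_suml sumrB sum_const_poly /cc polyC_natr /gp /Wp.
ring.
Qed.

Lemma HF N : eqm N (\poly_(i < N.+1) ((I_count i)%:R : rat))
  (gf N gp + (gf N (fun m => Wp m (1 + 'X)) - gf N gp) * geo N).
Proof.
have -> : gf N gp + (gf N (fun m => Wp m (1 + 'X)) - gf N gp) * geo N =
    \sum_(k < N.+1) 'X^k * ((cc k)%:P + \sum_(r <- wi k) Dl N r).
  rewrite /gf -sumrB mulr_suml -big_split /=; apply: eq_bigr => k _.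
  by rewrite -per_k; ring.
apply/eqmP => n Hn; rewrite coef_poly ltnS Hn coef_sum.
under eq_bigr do rewrite coefXnM.
rewrite -(big_mkord xpredT (fun k => if (n < k)%N then 0
   else ((cc k)%:P + \sum_(r <- wi k) Dl N r)`_(n - k))).
rewrite (@big_cat_nat _ _ _ n.+1) //=.
rewrite [X in _ + X](eq_big_nat _ _ (F2 := fun _ => 0)); last first.
  by move=> k Hk; rewrite ifT //; lia.
rewrite big1_eq addr0 big_nat_recr //= ltnn subnn coefD coefC /= coef_sum.
rewrite [X in _ + (_ + X)]big1 ?addr0; last by move=> r _; rewrite coef_Dl0.
rewrite I_count_ext I_formula natrD natr_sum addrC /cc; congr (_ + _).
rewrite [RHS]big_mkord; apply: eq_bigr => k _; have Hk := ltn_ord k.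
rewrite ifF; last by lia.
rewrite coefD coefC ifF; last by lia.
rewrite add0r coef_sum natr_sum; apply: eq_bigr => r _.
have -> : (n - k)%N = (n.-1 - k).+1 by lia.
by rewrite coef_DlS //; lia.
Qed.

Import Num.Theory.

Theorem mainTheorem3 (s : fps) :
  s 0%N = 1 ->
  (forall n, fps_mul s s n = fps_of_poly (1 - 4%:R *: 'X - 4%:R *: 'X^2) n) ->
  forall n : nat,
    fps_mul (fps_of_poly (8%:R *: ('X * (1 - 'X) ^+ 2)))
            (fun k => (I_count k)%:R) n
    = fps_of_poly (2%:R + 'X - 10%:R *: 'X^2 + 4%:R *: 'X^3) n
      - fps_mul (fps_of_poly (2%:R - 3%:R *: 'X)) s n.
Proof.
move=> Hs0 Hss n.
pose sN : {poly rat} := \poly_(i < n.+1) s i.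
pose F : {poly rat} := \poly_(i < n.+1) ((I_count i)%:R : rat).
have HsN : eqm n (sN * sN) (1 - 4%:R *: 'X - 4%:R *: 'X^2).
  apply/eqmP => k Hk; rewrite coefM -[RHS]/(fps_of_poly _ k) -Hss /fps_mul.
  apply: eq_bigr => i _; have Hi := ltn_ord i.
  by rewrite !coef_poly !ifT //; lia.
have Hs0' : sN`_0 = 1 by rewrite coef_poly.
have := partC HW HW0 Hh Hh0 Hg Hg0 (HF n) HsN Hs0'.
move/eqmP => /(_ n (leqnn n)).
rewrite coefB !coefM => H.
rewrite /fps_mul /fps_of_poly.
have E1 : forall (p : {poly rat}), \sum_(i < n.+1) p`_i * F`_(n - i) =
    \sum_(i < n.+1) p`_i * (I_count (n - i))%:R.
  by move=> p; apply: eq_bigr => i _; rewrite coef_poly ifT //; lia.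
have E2 : forall (p : {poly rat}), \sum_(i < n.+1) p`_i * sN`_(n - i) =
    \sum_(i < n.+1) p`_i * s (n - i)%N.
  by move=> p; apply: eq_bigr => i _; rewrite coef_poly ifT //; lia.
by rewrite -E1 H E2.
Qed.
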